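(* For $n\ge2$ and all $P,Q\in\Gamma_n$, $D_{Th}(P\|Q)\le 3D_{Jh}(P\|Q)$.
   Context: $\Gamma_n=\{P=(p_1,\dots,p_n): p_i>0,\ \sum p_i=1\}$. $h(P\|Q)=\frac12\sum_{i=1}^n(\sqrt{p_i}-\sqrt{q_i})^2$; $J(P\|Q)=\sum_{i=1}^n(p_i-q_i)\ln\frac{p_i}{q_i}$; $T(P\|Q)=\sum_{i=1}^n\frac{p_i+q_i}{2}\ln\frac{p_i+q_i}{2\sqrt{p_iq_i}}$. $D_{Th}=T-h$, $D_{Jh}=\frac18J-h$. *)

(* Defs.v *)
From Stdlib Require Import Reals List.
Open Scope R_scope.

Definition sumn (n : nat) (f : nat -> R) : R :=
  fold_right Rplus 0 (map f (seq 0 n)).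

Definition Gamma (n : nat) (p : nat -> R) : Prop :=
  (forall i, (i < n)%nat -> 0 < p i) /\ sumn n p = 1.

Definition hellinger (n : nat) (p q : nat -> R) : R :=
  / 2 * sumn n (fun i => (sqrt (p i) - sqrt (q i)) ^ 2).

Definition Jdiv (n : nat) (p q : nat -> R) : R :=
  sumn n (fun i => (p i - q i) * ln (p i / q i)).

Definition Tdiv (n : nat) (p q : nat -> R) : R :=
  sumn n (fun i => (p i + q i) / 2 * ln ((p i + q i) / (2 * sqrt (p i * q i)))).

Definition D_Th (n : nat) (p q : nat -> R) : R := Tdiv n p q - hellinger n p q.
Definition D_Jh (n : nat) (p q : nat -> R) : R := / 8 * Jdiv n p q - hellinger n p q.

(* Main.v *)
Require Import Defs.
From Stdlib Require Import Reals Lra Psatz List.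
From Coquelicot Require Import Coquelicot.
Open Scope R_scope.

Lemma mono (f df : R -> R) a b : a <= b ->
  (forall x, a <= x <= b -> is_derive f x (df x)) ->
  (forall x, a <= x <= b -> 0 <= df x) -> f a <= f b.
Proof.
  intros Hab Hd Hp.
  destruct (MVT_gen f a b df) as [c [Hc Heq]].
  - intros x Hx. apply Hd. rewrite Rmin_left in Hx by lra. rewrite Rmax_right in Hx by lra. lra.
  - intros x Hx. rewrite Rmin_left in Hx by lra. rewrite Rmax_right in Hx by lra.
    apply derivable_continuous_pt. exists (df x). apply is_derive_Reals. apply Hd. lra.
  - rewrite Rmin_left in Hc by lra. rewrite Rmax_right in Hc by lra.
    assert (0 <= df c * (b - a)) by (apply Rmult_le_pos; [apply Hp; lra | lra]). lra.
Qed.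

Definition ell (y : R) : R :=
  2 * ((y - 1) / (y + 1) + ((y - 1) / (y + 1)) ^ 3 / 3 + ((y - 1) / (y + 1)) ^ 5 / 5).

Lemma ln_lower y : 1 <= y -> ell y <= ln y.
Proof.
  intros Hy.
  assert (H : (fun x => ln x - ell x) 1 <= (fun x => ln x - ell x) y).
  { apply (mono (fun x => ln x - ell x) (fun x => ((x - 1) / (x + 1)) ^ 6 / x) 1 y Hy).
    - intros x Hx. unfold ell. auto_derive.
      + lra.
      + field. lra.
    - intros x Hx. apply Rmult_le_pos.
      + replace 6%nat with (3*2)%nat by reflexivity. rewrite pow_mult. apply pow2_ge_0.
      + apply Rlt_le, Rinv_0_lt_compat; lra. }
  simpl in H. rewrite ln_1 in H. unfold ell in H at 1.
  replace ((1 - 1) / (1 + 1)) with 0 in H by field. lra.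
Qed.

Lemma ln_upper u : 0 <= u -> ln (1 + u) <= u * (6 + u) / (6 + 4 * u).
Proof.
  intros Hu.
  assert (H : (fun x => x * (6 + x) / (6 + 4 * x) - ln (1 + x)) 0 <=
              (fun x => x * (6 + x) / (6 + 4 * x) - ln (1 + x)) u).
  { apply (mono (fun x => x * (6 + x) / (6 + 4 * x) - ln (1 + x))
             (fun x => 4 * x ^ 3 / ((6 + 4 * x) ^ 2 * (1 + x))) 0 u Hu).
    - intros x Hx. auto_derive.
      + lra.
      + field. lra.
    - intros x Hx. apply Rmult_le_pos.
      + assert (0 <= x ^ 3) by (apply pow_le; lra). lra.
      + apply Rlt_le, Rinv_0_lt_compat. apply Rmult_lt_0_compat; [|lra].
        apply pow_lt; lra. }
  simpl in H. replace (1 + 0) with 1 in H by ring. rewrite ln_1 in H.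
  replace (0 * (6 + 0) / (6 + 4 * 0)) with 0 in H by field. lra.
Qed.

Lemma core_left t : 1 <= t <= 3 ->
  (t^2+1)/2 * ln ((t^2+1)/(2*t)) + (t-1)^2 <= 3/4 * (t^2-1) * ln t.
Proof.
  intros Ht.
  set (u := (t-1)^2/(2*t)).
  assert (Hu : 0 <= u) by (unfold u; apply Rmult_le_pos; [apply pow2_ge_0| apply Rlt_le, Rinv_0_lt_compat; lra]).
  replace ((t^2+1)/(2*t)) with (1 + u) by (unfold u; field; lra).
  assert (H1 := ln_upper u Hu).
  assert (H2 := ln_lower t (proj1 Ht)).
  assert (Ha : (t^2+1)/2 * ln (1+u) <= (t^2+1)/2 * (u * (6 + u) / (6 + 4 * u))).
  { apply Rmult_le_compat_l; [|exact H1]. assert (0 <= t^2) by apply pow2_ge_0. lra. }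
  assert (Hb : 3/4 * (t^2-1) * ell t <= 3/4 * (t^2-1) * ln t).
  { apply Rmult_le_compat_l; [|exact H2]. nra. }
  set (w := t - 1).
  assert (Hw : 0 <= w <= 2) by (unfold w; lra).
  assert (E : 3/4 * (t^2-1) * ell t - ((t^2+1)/2 * (u * (6 + u) / (6 + 4 * u)) + (t-1)^2)
     = w^6 * (96 + 240*w + 174*w^2 + 21*w^3 - 24*w^4 - 15/2*w^5)
       / (120 * t * (t^2+t+1) * (t+1)^5)).
  { unfold ell, u, w. field. repeat apply conj; intro; nra. }
  assert (Hwd : w = t - 1) by reflexivity.
  clearbody w u.
  assert (P : 0 <= w^6 * (96 + 240*w + 174*w^2 + 21*w^3 - 24*w^4 - 15/2*w^5)
       / (120 * t * (t^2+t+1) * (t+1)^5)).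
  { apply Rmult_le_pos.
    - apply Rmult_le_pos.
      + replace 6%nat with (3*2)%nat by reflexivity. rewrite pow_mult. apply pow2_ge_0.
      + assert (w^4 <= 2 * w^3) by (assert (0 <= w^3) by (apply pow_le; lra); replace (w^4) with (w*w^3) by ring; nra).
        assert (w^3 <= 2 * w^2) by (assert (0 <= w^2) by (apply pow_le; lra); replace (w^3) with (w*w^2) by ring; nra).
        assert (w^5 <= 2 * w^4) by (assert (0 <= w^4) by (apply pow_le; lra); replace (w^5) with (w*w^4) by ring; nra).
        assert (0 <= w^2) by apply pow2_ge_0.
        assert (0 <= w^3) by (apply pow_le; lra).
        nra.
    - apply Rlt_le, Rinv_0_lt_compat.
      repeat apply Rmult_lt_0_compat; try lra; try nra; apply pow_lt; lra. }
  rewrite Hwd in *. lra.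
Qed.

Lemma core_right t : 3 <= t ->
  (t^2+1)/2 * ln ((t^2+1)/(2*t)) + (t-1)^2 <= 3/4 * (t^2-1) * ln t.
Proof.
  intros Ht.
  set (y := 2 * t^2 / (t^2+1)).
  assert (Hy : 1 <= y).
  { unfold y. apply Rmult_le_reg_r with (t^2+1); [nra|].
    field_simplify; nra. }
  assert (Ey : (t^2+1)/(2*t) = t / y) by (unfold y; field; nra).
  rewrite Ey, ln_div by lra.
  assert (H1 := ln_lower y Hy).
  assert (H2 := ln_lower t ltac:(lra)).
  assert (Ha : (t^2+1)/2 * (ln t - ln y) <= (t^2+1)/2 * (ln t - ell y)).
  { apply Rmult_le_compat_l; [nra|lra]. }
  assert (Hb : (t^2-5)/4 * ell t <= (t^2-5)/4 * ln t).
  { apply Rmult_le_compat_l; [nra|exact H2]. }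
  assert (Ev : (y - 1) / (y + 1) = (t^2 - 1) / (3 * t^2 + 1)) by (unfold y; field; nra).
  set (w := t - 3).
  assert (E : (t^2-5)/4 * ell t + (t^2+1)/2 * ell y - (t-1)^2 =
    (36511678464 + w * (235160862720 + w * (710533447680 + w * (1337661194240 + w * (1757456465920 + w * (1710105542656 + w * (1276222967808 + w * (746130782208 + w * (345976545280 + w * (127967385600 + w * (37754589696 + w * (8834308864 + w * (1619334784 + w * (227625920 + w * (23693520 + w * (1720632 + w * (77820 + w * (1650)))))))))))))))))) /
    (60 * (t+1)^5 * (3*t^2+1)^5)).
  { unfold ell. rewrite Ev. unfold w. field. repeat apply conj; intro; nra. }
  assert (Hw : 0 <= w) by (unfold w; lra).
  clearbody w y.
  assert (P : 0 <= (36511678464 + w * (235160862720 + w * (710533447680 + w * (1337661194240 + w * (1757456465920 + w * (1710105542656 + w * (1276222967808 + w * (746130782208 + w * (345976545280 + w * (127967385600 + w * (37754589696 + w * (8834308864 + w * (1619334784 + w * (227625920 + w * (23693520 + w * (1720632 + w * (77820 + w * (1650)))))))))))))))))) /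
    (60 * (t+1)^5 * (3*t^2+1)^5)).
  { apply Rmult_le_pos.
    - repeat (apply Rplus_le_le_0_compat || apply Rmult_le_pos); lra.
    - apply Rlt_le, Rinv_0_lt_compat.
      assert (0 < (t+1)^5) by (apply pow_lt; lra). assert (0 < (3*t^2+1)^5) by (apply pow_lt; nra). apply Rmult_lt_0_compat; [|assumption]. apply Rmult_lt_0_compat; [lra|assumption]. }
  lra.
Qed.

Lemma core t : 1 <= t ->
  (t^2+1)/2 * ln ((t^2+1)/(2*t)) + (t-1)^2 <= 3/4 * (t^2-1) * ln t.
Proof.
  intros Ht. destruct (Rle_lt_dec t 3).
  - apply core_left; lra.
  - apply core_right; lra.
Qed.

Lemma term_ge a b : 0 < a -> 0 < b -> b <= a ->
  (a+b)/2 * ln ((a+b)/(2*sqrt(a*b))) + (sqrt a - sqrt b)^2 <= 3/8 * ((a-b)*ln(a/b)).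
Proof.
  intros Ha Hb Hab.
  rewrite sqrt_mult by lra.
  assert (Hx : 0 < sqrt a) by (apply sqrt_lt_R0; lra).
  assert (Hy : 0 < sqrt b) by (apply sqrt_lt_R0; lra).
  assert (Hxy : sqrt b <= sqrt a) by (apply sqrt_le_1; lra).
  assert (Ea : a = sqrt a * sqrt a) by (rewrite sqrt_sqrt; lra).
  assert (Eb : b = sqrt b * sqrt b) by (rewrite sqrt_sqrt; lra).
  set (x := sqrt a) in *. set (y := sqrt b) in *. clearbody x y.
  subst a b.
  set (t := x / y).
  assert (Ht : 1 <= t).
  { unfold t. apply Rmult_le_reg_r with y; [lra|]. field_simplify; lra. }
  assert (C := core t Ht).
  replace ((x*x+y*y)/(2*(x*y))) with ((t^2+1)/(2*t)) by (unfold t; field; lra).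
  replace ((x*x)/(y*y)) with (t*t) by (unfold t; field; lra).
  assert (Htp : 0 < t) by lra.
  rewrite ln_mult by lra.
  assert (C2 := Rmult_le_compat_l (y*y) _ _ ltac:(nra) C).
  assert (E1 : y*y*((t^2+1)/2 * ln ((t^2+1)/(2*t)) + (t-1)^2) =
     (x*x+y*y)/2 * ln ((t^2+1)/(2*t)) + (x-y)^2) by (unfold t; field; lra).
  assert (E2 : y*y*(3/4 * (t^2-1) * ln t) = 3/8 * ((x*x-y*y)*(ln t + ln t))) by (unfold t; field; lra).
  lra.
Qed.

Lemma term a b : 0 < a -> 0 < b ->
  (a+b)/2 * ln ((a+b)/(2*sqrt(a*b))) + (sqrt a - sqrt b)^2 <= 3/8 * ((a-b)*ln(a/b)).
Proof.
  intros Ha Hb. destruct (Rle_lt_dec b a).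
  - apply term_ge; lra.
  - assert (H := term_ge b a Hb Ha ltac:(lra)).
    rewrite (Rplus_comm b a), (Rmult_comm b a) in H.
    rewrite (ln_div a b) by lra. rewrite (ln_div b a) in H by lra.
    replace ((sqrt a - sqrt b)^2) with ((sqrt b - sqrt a)^2) by ring.
    replace ((a - b) * (ln a - ln b)) with ((b - a) * (ln b - ln a)) by ring.
    exact H.
Qed.

Lemma sumn_S n f : sumn (S n) f = sumn n f + f n.
Proof.
  unfold sumn. rewrite seq_S, map_app, fold_right_app. simpl.
  induction (map f (seq 0 n)) as [|a l IH]; simpl.
  - ring.
  - rewrite IH. ring.
Qed.

Lemma sum_ineq n (T H J : nat -> R) :
  (forall i, (i < n)%nat -> T i + H i <= 3/8 * J i) ->
  sumn n T + sumn n H <= 3/8 * sumn n J.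
Proof.
  induction n as [|n IH]; intros Hi.
  - unfold sumn. simpl. lra.
  - rewrite !sumn_S.
    assert (A := IH (fun i Hlt => Hi i ltac:(lia))).
    assert (B := Hi n ltac:(lia)). lra.
Qed.

Theorem proposition5p8 (n : nat) (p q : nat -> R) :
  (2 <= n)%nat -> Gamma n p -> Gamma n q ->
  D_Th n p q <= 3 * D_Jh n p q.
Proof.
  intros _ [Hp _] [Hq _].
  unfold D_Th, D_Jh, Tdiv, Jdiv, hellinger.
  assert (S := sum_ineq n
    (fun i => (p i + q i) / 2 * ln ((p i + q i) / (2 * sqrt (p i * q i))))
    (fun i => (sqrt (p i) - sqrt (q i)) ^ 2)
    (fun i => (p i - q i) * ln (p i / q i))
    (fun i Hi => term (p i) (q i) (Hp i Hi) (Hq i Hi))).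
  lra.
Qed.
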